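(* Let $G$ be a group and $\tau\in G$. Define $\mathrm{var}(x)=\tau^{-1}x^{-1}\tau x$, $\mathfrak{C}_1(\tau)=\{x\in G:\mathrm{var}(x)=\mathrm{id}\}$ and $\mathfrak{C}_2(\tau)=\{x\in G:\mathrm{var}(x)\in\mathfrak{C}_1(\tau)\}$. Let $x,y\in\mathfrak{C}_2(\tau)$. Then: (1) $x^{-1}\in\mathfrak{C}_2(\tau)$; (2) $\mathrm{var}(x)$ and $\mathrm{var}(y^{-1})$ commute if and only if $xy\in\mathfrak{C}_2(\tau)$; (3) $\mathrm{var}(x)=\mathrm{var}(y^{-1})$ if and only if $xy\in\mathfrak{C}_1(\tau)$. *)

(* Defs.v *)
From HB Require Import structures.
From mathcomp Require Import all_boot.
From mathcomp Require Export monoid.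

Set Implicit Arguments.
Unset Strict Implicit.
Unset Printing Implicit Defensive.

Local Open Scope group_scope.

Definition var (G : groupType) (tau x : G) : G := tau^-1 * x^-1 * tau * x.

Definition C1 (G : groupType) (tau : G) : G -> Prop := fun x => var tau x = 1.

Definition C2 (G : groupType) (tau : G) : G -> Prop := fun x => C1 tau (var tau x).

(* Main.v *)
Require Import Defs.
From mathcomp Require Import all_boot.
From mathcomp Require Import monoid.

Local Open Scope group_scope.

Section Aux.
Context {G : groupType}.
Implicit Types tau u v w z a c d t : G.

Lemma varE tau z : tau ^ z = tau * var tau z.
Proof. by rewrite /var conjgE !mulgA mulgV mul1g. Qed.

Lemma C1E tau w : C1 tau w <-> commute tau w.
Proof.
rewrite /C1 /commute; split => H.
  by rewrite conjgC varE H mulg1.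
have : tau * var tau w = tau * 1 by rewrite -varE mulg1 conjgE H mulKg.
exact: mulgI.
Qed.

Lemma commuteJ u v g : commute (u ^ g) (v ^ g) <-> commute u v.
Proof.
rewrite /commute -!conjMg; split; first exact: conjg_inj.
by move=> ->.
Qed.

Lemma commute_cancel t c w : commute t c -> (commute t (c * w) <-> commute t w).
Proof.
rewrite /commute => H; rewrite mulgA H -!mulgA; split; first exact: mulgI.
by move=> ->.
Qed.

Lemma commute_cancel_l u d a : commute a u -> (commute (u * d) a <-> commute d a).
Proof.
move=> H; split => K; apply: commute_sym.
  by apply: (proj1 (commute_cancel _ _ d H)); apply: commute_sym.
by apply: (proj2 (commute_cancel _ _ d H)); apply: commute_sym.
Qed.

Lemma varV tau z : var tau z^-1 = ((var tau z)^-1) ^ z^-1.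
Proof.
apply: (@mulgI _ tau); rewrite -varE.
by rewrite -{1}(mulgK (var tau z) tau) conjMg -varE conjgK.
Qed.

Lemma varM tau x y : var tau (x * y) = var tau y * (var tau x) ^ y.
Proof.
apply: (@mulgI _ tau); rewrite -varE conjgM (varE tau x) conjMg (varE tau y) mulgA.
by rewrite conjgE !mulgA.
Qed.

End Aux.

Theorem lemmaA2 (G : groupType) (tau x y : G) (hx : C2 tau x) (hy : C2 tau y) :
  [/\ C2 tau x^-1,
      commute (var tau x) (var tau y^-1) <-> C2 tau (x * y)
    & var tau x = var tau y^-1 <-> C1 tau (x * y)].
Proof.
move: hx hy; rewrite /C2 => /C1E hx /C1E hy.
have vV : forall z, commute tau (var tau z) -> commute tau (var tau z^-1).
  move=> z hz; rewrite varV.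
  have e : tau = (tau ^ z) ^ z^-1 by rewrite conjgK.
  rewrite {1}e.
  apply/commuteJ; rewrite varE.
  apply: commute_sym; apply: commuteM.
    by apply: commute_sym; apply: commuteV.
  by apply: commute_sym; apply/commuteV/commute_refl.
have hd := vV _ hy.
set a := var tau x in hx *; set c := var tau y in hy *.
set d := var tau y^-1 in hd *.
have dE : d = (c^-1) ^ y^-1 by rewrite /d varV.
split; first by apply/C1E; exact: vV.
  apply: iff_trans _ (iff_sym (C1E _ _)).
  rewrite varM -/a -/c.
  apply: iff_trans _ (iff_sym (commute_cancel _ _ _ hy)).
  have e : tau = (tau ^ y^-1) ^ y by rewrite conjgKV.
  rewrite {1}e.
  apply: iff_trans _ (iff_sym (commuteJ _ _ _)).
  rewrite (varE tau y^-1) -/d.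
  apply: iff_trans _ (iff_sym (commute_cancel_l _ _ _ (commute_sym hx))).
  by split; apply: commute_sym.
rewrite /C1 varM -/a -/c dE; split.
  by move=> ->; rewrite conjgKV mulgV.
by move=> /mulg1_eq ->; rewrite conjgK.
Qed.
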